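(* Let the setting of the context hold. If $\boldsymbol{\alpha}\in\mathbb{R}^n$ has all entries positive and $\varphi(\boldsymbol{\alpha})=\lambda\boldsymbol{\alpha}$ for some real $\lambda$, then $\lambda=1$. In other words, $\varphi$ can only have $1$ as an eigenvalue corresponding to a positive eigenvector.
   Context: There are $n$ participants. Participant $i$ bears a loss $X_i$, a non-negative random variable, not almost surely constant. Let $\max[X_i]=\sup\{x: P(X_i\le x)<1\}$, assume $\sum_{i=1}^n\max[X_i]<\infty$. Let $S=\sum_{i=1}^nX_i$ and $A=[0,\sum_{i=1}^n\max[X_i]]$. Each participant has a disutility $v_i:[0,\max[X_i])\to\mathbb{R}$ that is $C^2$, increasing, strictly convex, with $\lim_{s\to0}v_i'(s)=0$ and $\lim_{s\to\max[X_i]}v_i'(s)=\infty$. Let $I_i:[0,\infty)\to[0,\max[X_i])$ be the inverse of $v_i'$. Let $\mathcal{K}$ be the set of functions $g:A\to\mathbb{R}_+$ with $g(0)=0$, strictly increasing. $\varphi_1:\mathbb{R}_+^n\to\mathcal{K}$: if all $\alpha_i>0$, $(\varphi_1(\boldsymbol{\alpha}))(s)=J(s,\boldsymbol{\alpha})$ where $J(\cdot,\boldsymbol{\alpha})$ is the inverse of $z\mapsto\sum_{i=1}^nI_i(z/\alpha_i)$, i.e. $\sum_iI_i(J(s,\boldsymbol{\alpha})/\alpha_i)=s$; otherwise $\varphi_1(\boldsymbol{\alpha})=0$. $\varphi_2:\mathcal{K}\to\mathbb{R}_+^n$: if $J\ne0$, $(\varphi_2(J))_i$ is the unique $\alpha_i>0$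 with $E[I_i(J(S)/\alpha_i)]=E[X_i]$; if $J=0$, $\varphi_2(J)=0$. $\varphi=\varphi_2\circ\varphi_1:\mathbb{R}_+^n\to\mathbb{R}_+^n$. *)

(* Defs.v *)
From HB Require Import structures.
From mathcomp Require Import all_boot all_order all_algebra.
From mathcomp Require Import all_classical all_reals all_analysis.
Set Implicit Arguments. Unset Strict Implicit. Unset Printing Implicit Defensive.
Import Order.TTheory GRing.Theory Num.Theory.
Import numFieldNormedType.Exports.
Local Open Scope classical_set_scope.
Local Open Scope ring_scope.

Section Setting.
Context {R : realType} {d : measure_display} {T : measurableType d}.
Variable (P : probability T R) (n : nat).

Definition maxrv (Y : T -> R) : R := sup [set x : R | (P [set t | (Y t <= x)%R] < 1)%E].

(* the set {x | P(Y <= x) < 1}; max[Y] finite iff it is bounded above *)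
Definition maxrv_set (Y : T -> R) : set R := [set x : R | (P [set t | (Y t <= x)%R] < 1)%E].

(* derivative of v on [0, M): v'(0) := 0 = lim_{s->0+} v'(s) *)
Definition dv (v : R -> R) (s : R) : R := if s == 0 then 0 else derive1 v s.

Definition disutility (v : R -> R) (M : R) : Prop :=
  {within `[0, M[, continuous v} /\
  (forall s, 0 < s < M -> derivable v s 1 /\ derivable (derive1 v) s 1) /\
  (forall s, 0 < s < M -> {for s, continuous (derive1 (derive1 v))}) /\
  (exists l : R, derive1 (derive1 v) x @[x --> 0^'+] --> l) /\
  (forall x y, 0 <= x -> x < y -> y < M -> v x < v y) /\
  (forall x y t, 0 <= x -> x < y -> y < M -> 0 < t < 1 ->
     v (t * x + (1 - t) * y) < t * v x + (1 - t) * v y) /\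
  (derive1 v x @[x --> 0^'+] --> 0) /\
  (derive1 v x @[x --> M^'-] --> +oo).

Definition Iinv (v : R -> R) (M : R) (y : R) : R :=
  xget 0 [set s : R | 0 <= s < M /\ dv v s = y].

(* extension of I to [0, +oo] by I(+oo) := M = lim_{y -> oo} I(y) *)
Definition Ibar (v : R -> R) (M : R) (z : \bar R) : R :=
  match z with
  | r%:E => Iinv v M r
  | +oo%E => M
  | -oo%E => 0
  end.

Variables (X : 'I_n -> T -> R) (v : 'I_n -> R -> R).

Definition Mx (i : 'I_n) : R := maxrv (X i).
Definition Ssum (t : T) : R := \sum_(i < n) X i t.
Definition I_ (i : 'I_n) : \bar R -> R := Ibar (v i) (Mx i).

(* J = phi_1(alpha), as a graph relation (J : A -> [0, +oo]) *)
Definition phi1_graph (alpha : 'I_n -> R) (J : R -> \bar R) : Prop :=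
  ((forall i, 0 < alpha i) ->
     forall s, 0 <= s <= \sum_(i < n) Mx i ->
       (0 <= J s)%E /\ \sum_(i < n) I_ i (J s * ((alpha i)^-1)%:E)%E = s) /\
  (~ (forall i, 0 < alpha i) ->
     forall s, 0 <= s <= \sum_(i < n) Mx i -> J s = 0%E).

Definition expect_eq (J : R -> \bar R) (i : 'I_n) (c : R) : Prop :=
  (\int[P]_t (I_ i (J (Ssum t) * (c^-1)%:E)%E)%:E = \int[P]_t (X i t)%:E)%E.

Definition phi2_graph (J : R -> \bar R) (beta : 'I_n -> R) : Prop :=
  let Jzero := forall s, 0 <= s <= \sum_(i < n) Mx i -> J s = 0%E in
  (Jzero -> forall i, beta i = 0) /\
  (~ Jzero -> forall i, 0 < beta i /\ expect_eq J i (beta i) /\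
                 forall c, 0 < c -> expect_eq J i c -> c = beta i).

(* phi = phi_2 o phi_1 as a graph: phi(alpha) = beta *)
Definition phi_graph (alpha beta : 'I_n -> R) : Prop :=
  exists J, phi1_graph alpha J /\ phi2_graph J beta.

End Setting.

(* Main.v *)
Require Import Defs.
From HB Require Import structures.
From mathcomp Require Import all_boot all_order all_algebra.
From mathcomp Require Import all_classical all_reals all_analysis.
From mathcomp Require Import ring lra measurable_realfun.
Import Order.TTheory GRing.Theory Num.Theory.
Import numFieldNormedType.Exports.
Local Open Scope classical_set_scope.
Local Open Scope ring_scope.

Lemma dnbhs_right (R : realType) (f : R -> R) (x l : R) : f @ x^' --> l -> f @ x^'+ --> l.
Proof.
move=> H; apply: cvg_trans H => A /=.
rewrite /nbhs /= /dnbhs /within /= => HA.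
rewrite /at_right /within; apply: filterS HA => y Hy yx.
by apply: Hy; rewrite gt_eqF.
Qed.
Lemma dnbhs_left (R : realType) (f : R -> R) (x l : R) : f @ x^' --> l -> f @ x^'- --> l.
Proof.
move=> H; apply: cvg_trans H => A /=.
rewrite /nbhs /= /dnbhs /within /= => HA.
rewrite /at_left /within; apply: filterS HA => y Hy yx.
by apply: Hy; rewrite lt_eqF.
Qed.
Lemma der_cvg (R: realType) (f : R -> R) x : derivable f x 1 ->
  (fun h => h^-1 * (f (h + x) - f x)) @ 0^' --> derive1 f x.
Proof.
move=> df; rewrite /derive1.
have -> : (fun h => h^-1 * (f (h + x) - f x)) = (fun h => h^-1 *: ((f \o shift x) (h *: 1) - f x)).
  by apply/funext => h /=; rewrite /GRing.scale/= mulr1.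
exact: df.
Qed.

Section RA.
Context {R : realType} (v : R -> R) (M : R) (hv : disutility v M).

Lemma hconv : forall x y t, 0 <= x -> x < y -> y < M -> 0 < t < 1 ->
     v (t * x + (1 - t) * y) < t * v x + (1 - t) * v y.
Proof. by case: hv => _ [_ [_ [_ [_ [H _]]]]]. Qed.

Lemma hinc : forall x y, 0 <= x -> x < y -> y < M -> v x < v y.
Proof. by case: hv => _ [_ [_ [_ [H _]]]]. Qed.

Lemma hder s : 0 < s < M -> derivable v s 1 /\ derivable (derive1 v) s 1.
Proof. by case: hv => _ [H _]; apply: H. Qed.

Lemma three_slope x m y : 0 <= x -> x < m -> m < y -> y < M ->
  (v m - v x) / (m - x) < (v y - v x) / (y - x) /\
  (v y - v x) / (y - x) < (v y - v m) / (y - m).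
Proof.
move=> x0 xm my yM.
set a := m - x; set b := y - m.
have a0 : 0 < a by rewrite subr_gt0.
have b0 : 0 < b by rewrite subr_gt0.
have ab0 : 0 < a + b by rewrite addr_gt0.
have yx : y - x = a + b by rewrite /a /b; ring.
set t := b / (a + b).
have t0 : 0 < t < 1.
  apply/andP; split; first by rewrite divr_gt0.
  by rewrite ltr_pdivrMr // mul1r ltrDr.
have := @hconv x y t x0 (lt_trans xm my) yM t0.
have -> : t * x + (1 - t) * y = m.
  rewrite /t; have -> : m = x + a by rewrite /a; ring.
  have -> : y = x + a + b by rewrite /a /b; ring.
  field; apply/lt0r_neq0 => //.
move=> key.
have key2 : (a + b) * v m < b * v x + a * v y.
  have -> : b * v x + a * v y = (a + b) * (t * v x + (1 - t) * v y).
    by rewrite /t; field; apply/lt0r_neq0.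
  by rewrite ltr_pM2l.
rewrite yx; split; rewrite -subr_gt0.
- have -> : (v y - v x) / (a + b) - (v m - v x) / a =
            (b * v x + a * v y - (a + b) * v m) / (a * (a + b)).
    by field; apply/andP; split; apply/lt0r_neq0.
  by rewrite divr_gt0 ?mulr_gt0 // subr_gt0.
- have -> : (v y - v m) / b - (v y - v x) / (a + b) =
            (b * v x + a * v y - (a + b) * v m) / (b * (a + b)).
    by field; apply/andP; split; apply/lt0r_neq0.
  by rewrite divr_gt0 ?mulr_gt0 // subr_gt0.
Qed.


Lemma tangent1 x y : 0 < x -> x < y -> y < M ->
  derive1 v x < (v y - v x) / (y - x).
Proof.
move=> x0 xy yM.
set m := (x + y) / 2.
have xm : x < m by rewrite /m; lra.
have my : m < y by rewrite /m; lra.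
have mM : m < M by apply: lt_trans yM.
have [dx _] := hder _ (ltac:(apply/andP; split => //; exact: lt_trans yM) : 0 < x < M).
have [+ _] := three_slope _ _ _ (ltW x0) xm my yM.
apply: le_lt_trans.
have := @dnbhs_right _ _ _ _ (@der_cvg _ _ _ dx).
move=> /cvgr_to_le; apply.
near=> h.
have h0 : 0 < h by near: h; exact: nbhs_right_gt.
have hm : h < m - x by near: h; apply: nbhs_right_lt; rewrite subr_gt0.
have [+ _] := @three_slope x (h + x) m (ltW x0) (ltac:(lra)) (ltac:(lra)) mM.
have -> : h + x - x = h by ring.
by rewrite mulrC => /ltW.
Unshelve. all: by end_near.
Qed.

Lemma tangent2 x y : 0 <= x -> x < y -> y < M ->
  (v y - v x) / (y - x) < derive1 v y.
Proof.
move=> x0 xy yM.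
set m := (x + y) / 2.
have xm : x < m by rewrite /m; lra.
have my : m < y by rewrite /m; lra.
have [dy _] := hder _ (ltac:(apply/andP; split => //; lra) : 0 < y < M).
have [_] := three_slope _ _ _ x0 xm my yM.
move/lt_le_trans; apply.
have := @dnbhs_left _ _ _ _ (@der_cvg _ _ _ dy).
move=> /cvgr_to_ge; apply.
near=> h.
have h0 : h < 0 by near: h; exact: nbhs_left_lt.
have hm : m - y < h by near: h; apply: nbhs_left_gt; rewrite subr_lt0.
have [_] := @three_slope m (h + y) y (ltac:(lra)) (ltac:(lra)) (ltac:(lra)) yM.
have -> : h^-1 * (v (h + y) - v y) = (v y - v (h + y)) / (y - (h + y)).
  have hn : h != 0 by rewrite lt_eqF.
  have -> : y - (h + y) = - h by ring.
  by field.
by move/ltW.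
Unshelve. all: by end_near.
Qed.


Lemma hdv0 : derive1 v x @[x --> 0^'+] --> 0.
Proof. by case: hv => _ [_ [_ [_ [_ [_ [H _]]]]]]. Qed.

Lemma hdvM : derive1 v x @[x --> M^'-] --> +oo.
Proof. by case: hv => _ [_ [_ [_ [_ [_ [_ H]]]]]]. Qed.

Lemma der_gt0 y : 0 < y -> y < M -> 0 < derive1 v y.
Proof.
move=> y0 yM; apply: lt_trans (tangent2 _ _ (lexx 0) y0 yM).
by rewrite divr_gt0 ?subr_gt0 ?subr0 // hinc.
Qed.

Lemma der_lt x y : 0 < x -> x < y -> y < M -> derive1 v x < derive1 v y.
Proof.
move=> x0 xy yM; apply: lt_trans (tangent1 _ _ x0 xy yM) _.
exact: tangent2 _ _ (ltW x0) xy yM.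
Qed.

Lemma dv_lt x y : 0 <= x -> x < y -> y < M -> dv v x < dv v y.
Proof.
move=> x0 xy yM.
have y0 : 0 < y by apply: le_lt_trans xy.
have -> : dv v y = derive1 v y by rewrite /dv (gt_eqF y0).
have [->|xn0] := eqVneq x 0; first by rewrite /dv eqxx; exact: der_gt0.
rewrite /dv (negbTE xn0); apply: der_lt => //; rewrite lt_neqAle eq_sym xn0 //.
Qed.

Lemma dv_exists r : 0 < M -> 0 <= r -> exists s, 0 <= s < M /\ dv v s = r.
Proof.
move=> M0; rewrite le_eqVlt => /orP [/eqP <-|r0].
  by exists 0; rewrite lexx M0 /dv eqxx.
have : \forall x \near 0^'+, (0 < x /\ x < M) /\ derive1 v x < r.
  near=> x; split; [split|]; near: x.
  - exact: nbhs_right_gt.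
  - exact: nbhs_right_lt.
  - by move/cvgr_lt: hdv0; apply.
move/filter_ex => [s1 [[s10 s1M] s1r]].
have : \forall x \near M^'-, (0 < x /\ x < M) /\ r < derive1 v x.
  near=> x; split; [split|]; near: x.
  - exact: nbhs_left_gt.
  - exact: nbhs_left_lt.
  - by move/cvgryPgt : hdvM; apply.
move/filter_ex => [s2 [[s20 s2M] s2r]].
have s12 : s1 < s2.
  rewrite ltNge; apply/negP; rewrite le_eqVlt => /orP [/eqP e|s21].
    by move: s1r; rewrite -e => /(lt_trans s2r); rewrite ltxx.
  have := der_lt _ _ s20 s21 s1M.
  by move=> /(lt_trans (lt_trans s1r s2r)); rewrite ltxx.
have cont : {within `[s1, s2], continuous (derive1 v)}.
  apply: derivable_within_continuous => z; rewrite in_itv /= => /andP [z1 z2].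
  by apply: (hder z _).2; apply/andP; split; [exact: lt_le_trans z1|exact: le_lt_trans s2M].
have hr : Num.min (derive1 v s1) (derive1 v s2) <= r <= Num.max (derive1 v s1) (derive1 v s2).
  apply/andP; split.
  - by apply: le_trans (ltW s1r); rewrite ge_min lexx.
  - by apply: le_trans (ltW s2r) _; rewrite le_max lexx orbT.
have [c] := IVT (ltW s12) cont hr.
rewrite in_itv /= => /andP [c1 c2] dc.
have c0 : 0 < c by apply: lt_le_trans c1.
exists c; rewrite (ltW c0) (le_lt_trans c2 s2M) /dv gt_eqF //.
Unshelve. all: by end_near.
Qed.

Lemma Iinv_spec r : 0 < M -> 0 <= r -> (0 <= Iinv v M r < M) /\ dv v (Iinv v M r) = r.
Proof.
move=> M0 r0; rewrite /Iinv.
have := @xgetPex _ 0 [set s : R | 0 <= s < M /\ dv v s = r] (dv_exists _ M0 r0).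
by [].
Qed.

Lemma Iinv_le a b : 0 < M -> 0 <= a -> a <= b -> Iinv v M a <= Iinv v M b.
Proof.
move=> M0 a0 ab.
have [/andP [ia0 iaM] da] := Iinv_spec _ M0 a0.
have [/andP [ib0 ibM] db] := Iinv_spec _ M0 (le_trans a0 ab).
rewrite leNgt; apply/negP => ba.
have := dv_lt _ _ ib0 ba iaM; rewrite da db => /(le_lt_trans ab); rewrite ltxx.
by [].
Qed.

Lemma Iinv_bound r : 0 <= M -> 0 <= Iinv v M r <= M.
Proof.
move=> M0; rewrite /Iinv; case: xgetP => [x _ /= [/andP [x0 xM] _]|_].
  by rewrite x0 ltW.
by rewrite lexx M0.
Qed.

Lemma Ibar_bound z : 0 <= M -> 0 <= Ibar v M z <= M.
Proof.
move=> M0; case: z => [r||] /=; [exact: Iinv_bound| by rewrite M0 lexx| by rewrite lexx M0].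
Qed.

Lemma Ibar_le a b : 0 < M -> (0 <= a)%E -> (a <= b)%E -> Ibar v M a <= Ibar v M b.
Proof.
move=> M0; case: a => [a||] //; case: b => [b||] //=.
- by rewrite !lee_fin; exact: Iinv_le.
- by move=> _ _; have /andP [] := Iinv_bound a (ltW M0).
Qed.

End RA.
Section Prob.
Context {R : realType} {d : measure_display} {T : measurableType d} (P : probability T R).

Lemma mle (Y : T -> R) x : measurable_fun setT Y -> measurable [set t | Y t <= x].
Proof.
move=> hY.
have -> : [set t | Y t <= x] = setT `&` Y @^-1` [set` `]-oo, x]].
  by apply/seteqP; split => t /=; [move=> h; split => //; rewrite in_itv /= h | move=> [_]; rewrite in_itv /=].
by apply: hY => //; exact: measurable_itv.
Qed.

Lemma tail0 (Y : T -> R) : measurable_fun setT Y -> has_ubound (maxrv_set P Y) ->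
  P [set t | maxrv P Y < Y t] = 0%E.
Proof.
move=> hY hub.
set m := maxrv P Y.
have mY x : measurable [set t | Y t <= x] := mle _ x hY.
have H1 x : m < x -> P [set t | Y t <= x] = 1%E.
  move=> mx; apply/eqP; rewrite eq_le probability_le1 ?mY //=.
  rewrite leNgt; apply/negP => hlt.
  have : x <= m by apply: ub_le_sup hub x hlt.
  by rewrite leNgt mx.
have -> : [set t | m < Y t] = \bigcup_k (~` [set t | Y t <= m + k.+1%:R^-1]).
  apply/seteqP; split => t /=.
  - move=> /ltr_add_invr [k hk]; exists k => //=.
    by apply/negP; rewrite -ltNge.
  - move=> [j _] /= /negP; rewrite -ltNge; apply: le_lt_trans.
    by rewrite lerDl.
apply/negligibleP.
  by apply: bigcupT_measurable => k; apply: measurableC; apply: mY.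
apply: negligible_bigcup => k.
apply/negligibleP; first by apply: measurableC; apply: mY.
apply: (eq_trans (probability_setC P (mY _))).
rewrite H1 ?subee //.
by rewrite ltrDl invr_gt0 ltr0n.
Qed.


Lemma maxrv_gt0 (Y : T -> R) : measurable_fun setT Y -> has_ubound (maxrv_set P Y) ->
  (forall t, 0 <= Y t) -> ~ (exists c : R, P [set t | Y t = c] = 1%E) -> 0 < maxrv P Y.
Proof.
move=> hY hub Y0 hnc; rewrite ltNge; apply/negP => m0; apply: hnc; exists 0.
have mY x : measurable [set t | Y t <= x] := mle _ x hY.
have -> : [set t | Y t = 0] = ~` ~` [set t | Y t <= 0].
  rewrite setCK; apply/seteqP; split => t /=; first by move->.
  by move=> h; apply/eqP; rewrite eq_le h Y0.
apply: (eq_trans (probability_setC P (measurableC (mY 0)))).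
suff -> : P (~` [set t | Y t <= 0]) = 0%E by rewrite sube0.
apply/eqP; rewrite eq_le measure_ge0 andbT -(tail0 _ hY hub).
have mC : measurable [set t | maxrv P Y < Y t].
  have -> : [set t | maxrv P Y < Y t] = ~` [set t | Y t <= maxrv P Y].
    by apply/seteqP; split => t /=; [move=> h; apply/negP; rewrite -ltNge | move/negP; rewrite -ltNge].
  exact: measurableC.
apply: le_measure; rewrite ?inE //; first exact: measurableC.
move=> t /= /negP; rewrite -ltNge; exact: le_lt_trans.
Qed.

End Prob.
Section Integ.
Context {R : realType} {d : measure_display} {T : measurableType d} (P : probability T R).
Local Open Scope ereal_scope.

Lemma int_mono (f1 f2 : T -> \bar R) : (forall x, 0 <= f1 x) -> (forall x, f1 x <= f2 x) ->
  \int[P]_x f1 x <= \int[P]_x f2 x.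
Proof.
move=> f10 f12.
rewrite !ge0_integralTE //; last by move=> x; apply: le_trans (f10 x) (f12 x).
apply: ereal_sup_le => _ [h hf <-]; exists h => //= x.
exact: le_trans (hf x) (f12 x).
Qed.

Lemma ae_of_D (D : set T) (Q : T -> Prop) : measurable D -> P (~` D) = 0 ->
  (forall t, D t -> Q t) -> {ae P, forall t, Q t}.
Proof.
move=> mD PD DQ; exists (~` D); split => //; first exact: measurableC.
by move=> t /= nQ Dt; apply: nQ; apply: DQ.
Qed.

Lemma int_ae (f g : T -> R) (D : set T) (B : R) : measurable D -> P (~` D) = 0 ->
  measurable_fun setT g -> (forall t, (0 <= f t <= B)%R) -> (forall t, (0 <= g t)%R) ->
  (forall t, D t -> f t = g t) ->
  \int[P]_t (f t)%:E = \int[P]_t (g t)%:E.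
Proof.
move=> mD PD mg fB g0 fg.
set lo := fun t => (g t * \1_D t)%R.
set hi := fun t => (g t * \1_D t + B * \1_(~` D) t)%R.
have mlo : measurable_fun setT lo.
  by apply: measurable_funM => //; exact: measurable_indic.
have mhi : measurable_fun setT hi.
  apply: measurable_funD; first by apply: measurable_funM => //; exact: measurable_indic.
  apply: measurable_funM; first exact: measurable_cst.
  by apply: measurable_indic; exact: measurableC.
have ae1 : \int[P]_t (lo t)%:E = \int[P]_t (g t)%:E.
  apply: ae_eq_integral => //; [exact/measurable_EFinP|exact/measurable_EFinP|].
  exists (~` D); split => //; first exact: measurableC.
  move=> t /= nQ Dt; apply: nQ => _; rewrite /lo indicE mem_set //= mulr1 //.
have ae2 : \int[P]_t (hi t)%:E = \int[P]_t (g t)%:E.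
  apply: ae_eq_integral => //; [exact/measurable_EFinP|exact/measurable_EFinP|].
  exists (~` D); split => //; first exact: measurableC.
  move=> t /= nQ Dt; apply: nQ => _.
  rewrite /hi !indicE mem_set // memNset /=; last by move=> /(_ Dt).
  by rewrite mulr1 mulr0 addr0.
have hlo t : (lo t <= f t)%R.
  rewrite /lo indicE; case: (boolP (t \in D)) => [/set_mem Dt|_].
    by rewrite mulr1 fg.
  by rewrite mulr0; case/andP: (fB t).
have hhi t : (f t <= hi t)%R.
  rewrite /hi !indicE; case: (boolP (t \in D)) => [/set_mem Dt|nD].
    rewrite memNset /=; last by move=> /(_ Dt).
    by rewrite mulr1 mulr0 addr0 fg.
  rewrite mem_set /=; last by move=> Dt; move: nD; rewrite mem_set.
  by rewrite mulr0 mulr1 add0r; case/andP: (fB t).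
have lo0 t : (0 <= lo t)%R.
  by rewrite /lo mulr_ge0 // indicE; case: (_ \in _).
apply/eqP; rewrite eq_le; apply/andP; split.
- rewrite -ae2; apply: int_mono => t; rewrite lee_fin //; case/andP: (fB t) => //.
- rewrite -ae1; apply: int_mono => t; rewrite lee_fin //.
Qed.

End Integ.
Theorem proposition3p8 (R : realType) (d : measure_display) (T : measurableType d)
  (P : probability T R) (n : nat) (X : 'I_n -> T -> R) (v : 'I_n -> R -> R)
  (hn : (0 < n)%N)
  (hXmeas : forall i, measurable_fun setT (X i))
  (hXnonneg : forall i t, 0 <= X i t)
  (hXnonconst : forall i, ~ (exists c : R, P [set t | X i t = c] = 1%E))
  (hXmax : forall i, has_ubound (maxrv_set P (X i)))
  (hv : forall i, disutility (v i) (Mx P X i))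
  (alpha : 'I_n -> R) (lambda : R)
  (halpha : forall i, 0 < alpha i)
  (heig : phi_graph P X v alpha (fun i => lambda * alpha i)) :
  lambda = 1.
Proof.
have M0 i : 0 < Mx P X i := maxrv_gt0 P (X i) (hXmeas i) (hXmax i) (hXnonneg i) (hXnonconst i).
set K := \sum_(i < n) Mx P X i.
have K0 : 0 < K.
  apply: lt_le_trans (M0 (Ordinal hn)) _.
  rewrite /K (bigD1 (Ordinal hn)) //= lerDl sumr_ge0 // => i _; exact: ltW.
have [J [[ph1 _] ph2]] := heig.
have {ph1} ph1 := ph1 halpha.
have Ile i a b : (0 <= a)%E -> (a <= b)%E -> I_ P X v i a <= I_ P X v i b.
  exact: (Ibar_le _ _ (hv i) _ _ (M0 i)).
have Ibd i z : 0 <= I_ P X v i z <= Mx P X i.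
  exact: (Ibar_bound _ _ _ (ltW (M0 i))).
have Jmono s1 s2 : 0 <= s1 -> s1 <= s2 -> s2 <= K -> (J s1 <= J s2)%E.
  move=> s10 s12 s2K; rewrite leNgt; apply/negP => Jlt.
  have [J10 e1] := ph1 s1 (ltac:(rewrite s10 (le_trans s12 s2K) //)).
  have [J20 e2] := ph1 s2 (ltac:(rewrite (le_trans s10 s12) s2K //)).
  have : s2 <= s1.
    rewrite -e1 -e2; apply: ler_sum => i _; apply: Ile.
      by apply: mule_ge0 => //; rewrite lee_fin invr_ge0 ltW.
    by apply: lee_wpmul2r; [rewrite lee_fin invr_ge0 ltW | exact: ltW].
  move=> s21; have e : s1 = s2 by apply/eqP; rewrite eq_le s12 s21.
  by move: Jlt; rewrite e ltxx.
move: ph2 => /= [ph2z ph2n].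
have hK : 0 <= K <= K.
by apply/andP; split; [exact: ltW|exact: lexx].
have h0 : (0:R) <= 0 <= K by apply/andP; split; [exact: lexx|exact: ltW].
case: (pselect (forall s, 0 <= s <= K -> J s = 0%E)) => [Jz|nJz].
  have e0 := (ph1 0 h0).2; have eK := (ph1 K hK).2.
  rewrite (Jz 0 h0) in e0; rewrite (Jz K hK) in eK.
  have : K = 0 by rewrite -eK e0.
  by move=> K00; move: K0; rewrite K00 ltxx.
have {ph2z ph2n nJz} hb := ph2n nJz.
pose clamp s := if s < 0 then 0 else if K < s then K else s.
have clamp_in s : 0 <= clamp s <= K.
  rewrite /clamp; case: ifP => [_|/negbT]; first by rewrite lexx ltW.
  rewrite -leNgt => s0; case: ifP => [_|/negbT]; first by rewrite ltW // lexx.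
  by rewrite -leNgt s0.
have clampE s : 0 <= s <= K -> clamp s = s.
  move=> /andP [s0 sK]; rewrite /clamp ltNge s0 /= ltNge sK //.
have clamp_mono s t : s <= t -> clamp s <= clamp t.
  move=> st; rewrite /clamp.
  have [s0|s0] := ltP s 0; have [t0|t0] := ltP t 0;
    have [sK|sK] := ltP K s; have [tK|tK] := ltP K t; lra.
pose psi i c s := I_ P X v i (J (clamp s) * (c^-1)%:E).
have psi_nd i c : 0 < c -> {homo psi i c : x y / x <= y}.
  move=> c0 x y xy; rewrite /psi; have /andP [cx0 cxK] := clamp_in x.
  have /andP [cy0 cyK] := clamp_in y.
  have Jx0 := (ph1 _ (clamp_in x)).1.
  apply: Ile; first by apply: mule_ge0 => //; rewrite lee_fin invr_ge0 ltW.
  apply: lee_wpmul2r; first by rewrite lee_fin invr_ge0 ltW.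
  exact: Jmono (clamp_mono _ _ xy) cyK.
have mS : measurable_fun setT (Ssum X).
  by rewrite /Ssum; apply: measurable_sum.
pose g i c t := psi i c (Ssum X t).
have mg i c : 0 < c -> measurable_fun setT (g i c).
  move=> c0; apply: measurableT_comp mS.
  exact: nondecreasing_measurable (psi_nd i c c0).
set D := [set t | Ssum X t <= K].
have mD : measurable D by exact: mle.
have S0 t : 0 <= Ssum X t by rewrite /Ssum sumr_ge0.
have PD : P (~` D) = 0%E.
  apply/negligibleP; first exact: measurableC.
  pose F (k : nat) := [set t | exists2 i : 'I_n, (i : nat) = k & Mx P X i < X i t].
  apply: (@negligibleS _ _ _ _ (\bigcup_k F k)); last first.
    apply: negligible_bigcup => k.
    case: (ltnP k n) => hk.
      apply: (@negligibleS _ _ _ _ [set t | Mx P X (Ordinal hk) < X (Ordinal hk) t]).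
        by move=> t /= [i ik it]; have -> : Ordinal hk = i by apply: val_inj.
      apply/negligibleP; last exact: tail0.
      have -> : [set t | Mx P X (Ordinal hk) < X (Ordinal hk) t] =
                ~` [set t | X (Ordinal hk) t <= Mx P X (Ordinal hk)].
        by apply/seteqP; split => t /=; [move=> h; apply/negP; rewrite -ltNge | move/negP; rewrite -ltNge].
      by apply: measurableC; apply: mle.
    apply: (@negligibleS _ _ _ _ set0); last exact: negligible_set0.
    by move=> t /= [i ik _]; move: (ltn_ord i); rewrite ik ltnNge hk.
  move=> t /= nD; apply: contrapT => nU; apply: nD.
  apply: ler_sum => i _; rewrite leNgt; apply/negP => lt.
  by apply: nU; exists i => //; exists i.
have g0 i c t : 0 <= g i c t by have /andP [] := Ibd i (J (clamp (Ssum X t)) * (c^-1)%:E)%E.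
have gD i c t : D t -> g i c t = I_ P X v i (J (Ssum X t) * (c^-1)%:E)%E.
  by move=> Dt; rewrite /g /psi clampE // S0.
pose E i c := (\int[P]_t (g i c t)%:E)%E.
have eqa i c : 0 < c ->
    (\int[P]_t (I_ P X v i (J (Ssum X t) * (c^-1)%:E)%E)%:E)%E = E i c.
  move=> c0; apply: (int_ae P _ _ _ (Mx P X i) mD PD (mg i c c0)) => //.
  by move=> t Dt; rewrite gD.
have Emono i c1 c2 : 0 < c1 -> c1 <= c2 -> (E i c2 <= E i c1)%E.
  move=> c10 c12; have c20 := lt_le_trans c10 c12.
  apply: ge0_le_integral => //.
  - by move=> t _; rewrite lee_fin.
  - by apply/measurable_EFinP; exact: mg.
  - by apply/measurable_EFinP; exact: mg.
  move=> t _; rewrite lee_fin /g /psi; apply: Ile.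
    by apply: mule_ge0; [exact: (ph1 _ (clamp_in _)).1| rewrite lee_fin invr_ge0 ltW].
  apply: lee_wpmul2l; first exact: (ph1 _ (clamp_in _)).1.
  by rewrite lee_fin lef_pV2 // posrE.
have Ebd i c : (0 <= E i c <= (Mx P X i)%:E)%E.
  apply/andP; split; first by apply: integral_ge0 => t _; rewrite lee_fin.
  apply: le_trans (int_mono P (fun t => (g i c t)%:E) (cst (Mx P X i)%:E) _ _) _.
  - by move=> t; rewrite lee_fin.
  - by move=> t; rewrite lee_fin /=; have /andP [] := Ibd i (J (clamp (Ssum X t)) * (c^-1)%:E)%E.
  rewrite integral_cst // -[X in (_ <= X)%E]mule1; apply: lee_wpmul2l; [by rewrite lee_fin ltW | exact: probability_le1].
have aeD (Q : T -> Prop) : (forall t, D t -> Q t) -> {ae P, forall t, Q t}.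
  move=> DQ; exists (~` D); split => //; first exact: measurableC.
  by move=> t /= nQ Dt; apply: nQ; apply: DQ.
have hsumA : (\sum_(i < n) E i (alpha i) = \int[P]_t (Ssum X t)%:E)%E.
  transitivity (\int[P]_t (\sum_(i < n) g i (alpha i) t)%:E)%E.
    rewrite /E -ge0_integral_sum //.
    - by apply: eq_integral => t _; rewrite sumEFin.
    - by move=> j; apply/measurable_EFinP; exact: mg.
    - by move=> j t _; rewrite lee_fin.
  apply: ae_eq_integral => //.
  - by apply/measurable_EFinP; apply: measurable_sum => j; exact: mg.
  - by apply/measurable_EFinP.
  apply: aeD => t Dt _; congr EFin.
  have StK : 0 <= Ssum X t <= K by rewrite S0.
  rewrite -[RHS](ph1 _ StK).2; apply: eq_bigr => j _; exact: gD.
have hsumB : (\int[P]_t (Ssum X t)%:E = \sum_(i < n) \int[P]_t (X i t)%:E)%E.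
  rewrite /Ssum; under eq_integral do rewrite -sumEFin.
  rewrite ge0_integral_sum //.
  - by move=> j; apply/measurable_EFinP.
  - by move=> j t _; rewrite lee_fin.

have hbX i : E i (lambda * alpha i) = (\int[P]_t (X i t)%:E)%E.
  have [b0 [ex _]] := hb i; rewrite -eqa //; exact: ex.
have hfin i c : E i c = (fine (E i c))%:E.
  have /andP [e0 eM] := Ebd i c.
  by rewrite fineK // ge0_fin_numE // (le_lt_trans eM) // ltey.
have finE i c : E i c \is a fin_num by rewrite hfin.
have hab : \sum_(i < n) fine (E i (alpha i)) = \sum_(i < n) fine (E i (lambda * alpha i)).
  apply: EFin_inj; rewrite -!sumEFin.
  rewrite (eq_bigr (fun i => E i (alpha i))); last by move=> j _; rewrite -hfin.
  rewrite [RHS](eq_bigr (fun i => E i (lambda * alpha i))); last by move=> j _; rewrite -hfin.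
  rewrite hsumA hsumB; apply: eq_bigr => j _; by rewrite hbX.
set i0 := Ordinal hn.
have l0 : 0 < lambda by have [+ _] := hb i0; rewrite pmulr_lgt0.
have key i : fine (E i (alpha i)) = fine (E i (lambda * alpha i)).
  case: (leP 1 lambda) => hl.
    have ba j : fine (E j (lambda * alpha j)) <= fine (E j (alpha j)).
      by apply: fine_le => //; apply: Emono => //; rewrite ler_peMl // ltW.
    have : \sum_(j < n) (fine (E j (alpha j)) - fine (E j (lambda * alpha j))) = 0.
      by rewrite sumrB hab subrr.
    move/psumr_eq0P => H; apply/eqP; rewrite -subr_eq0; apply/eqP; apply: H => // j _.
    by rewrite subr_ge0.
  have ba j : fine (E j (alpha j)) <= fine (E j (lambda * alpha j)).
    apply: fine_le => //; apply: Emono; first by rewrite mulr_gt0.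
    by rewrite ler_piMl // ltW.
  have : \sum_(j < n) (fine (E j (lambda * alpha j)) - fine (E j (alpha j))) = 0.
    by rewrite sumrB hab subrr.
  move/psumr_eq0P => H; apply/eqP; rewrite eq_sym -subr_eq0; apply/eqP; apply: H => // j _.
  by rewrite subr_ge0.
have [_ [_ uniq]] := hb i0.
have := uniq (alpha i0) (halpha i0).
rewrite /expect_eq eqa // -hbX hfin key -hfin => /(_ erefl) e.
apply: (mulIf (lt0r_neq0 (halpha i0))); by rewrite mul1r -e.
Qed.
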